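(* Let $D$ be a finite-dimensional division $\mathbb{R}$-algebra, $n\ge 2$, and let $\mathbf{H}$ be an algebraic $\mathbb{R}$-group in the isogeny class of $\mathrm{SL}_{D^n}$ or $\mathrm{GL}_{D^n}$, with standard projective representation $\rho_{\mathrm{std}}:\mathbf{H}\to\mathrm{PGL}_{D^n}$. Let $h\in\mathbf{H}(\mathbb{R})$ be non-central. Then for every $p\in\mathbb{P}(D^n)$, the span of $\{\rho_{\mathrm{std}}(xhx^{-1})p: x\in\mathbf{H}(\mathbb{R})\}$ is the whole of $\mathbb{P}(D^n)$.
   Context: $D^n$ is viewed as a right $D$-module; $\mathrm{GL}_{D^n}$ ($\mathrm{SL}_{D^n}$) is the $\mathbb{R}$-group of $D$-linear automorphisms (of reduced norm $1$), $\mathrm{PGL}_{D^n}$ the quotient of $\mathrm{GL}_{D^n}$ by its center, and $\mathbb{P}(D^n)$ the set of $1$-dimensional right $D$-submodules; span means smallest $D$-subspace containing the points. The standard projective representation is the canonical morphism $\mathbf{H}\to\mathrm{PGL}_{D^n}$. *)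

(* Defs.v *)
From HB Require Import structures.
From mathcomp Require Import all_boot all_order all_algebra all_field.
From mathcomp Require Import monoid.
From mathcomp Require Import reals.
Set Implicit Arguments. Unset Strict Implicit. Unset Printing Implicit Defensive.
Import GRing.Theory.
Local Open Scope ring_scope.

Definition division_algebra (R : fieldType) (D : falgType R) : Prop :=
  forall x : D, x != 0 -> x \is a GRing.unit.

(* D^n is realized as column vectors 'cV[D]_n, viewed as a RIGHT D-module:
   v . a := v *m a%:M  (a%:M is the 1x1 matrix with entry a).
   D-linear endomorphisms of the right module D^n = left multiplication by
   n x n matrices over D. *)
Definition rscale (D : ringType) (n : nat) (v : 'cV[D]_n) (a : D) : 'cV[D]_n :=
  v *m (a%:M : 'M[D]_1).

Definition invertible_mx (D : ringType) (n : nat) (A : 'M[D]_n) : Prop :=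
  exists B : 'M[D]_n, A *m B = 1%:M /\ B *m A = 1%:M.

(* The center of GL_{D^n}(R): scalar matrices c%:M with c a nonzero central
   element of D. *)
Definition central_elt (D : ringType) (c : D) : Prop := forall d : D, c * d = d * c.

(* Equality in PGL_{D^n}(R) = GL_{D^n}(R) / center. *)
Definition proj_eq (D : ringType) (n : nat) (A B : 'M[D]_n) : Prop :=
  exists c : D, central_elt c /\ c != 0 /\ A = c%:M *m B.

(* Elementary transvections 1 + a E_ij (i <> j); they generate SL_{D^n}(R). *)
Definition transvection (D : ringType) (n : nat) (i j : 'I_n) (a : D) : 'M[D]_n :=
  1%:M + a *: delta_mx i j.

(* For points of
   P(D^n) (right lines v D, v <> 0) the span of a set of points is the span of
   any set of representatives. *)
Definition rspan_full (D : ringType) (n : nat) (S : 'cV[D]_n -> Prop) : Prop :=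
  forall w : 'cV[D]_n, exists (k : nat) (vs : 'I_k -> 'cV[D]_n) (cs : 'I_k -> D),
    (forall i, S (vs i)) /\ w = \sum_(i < k) rscale (vs i) (cs i).

(* Abstract model of "H an R-group in the isogeny class of SL_{D^n} or GL_{D^n}
   with standard projective representation rho_std : H -> PGL_{D^n}", at the
   level of real points: a group Hr (= H(R)) with a map rho sending each element
   to a representative matrix in GL_{D^n}(R) of rho_std(h) in PGL_{D^n}(R), s.t.
   - rho is a homomorphism modulo the center (a morphism to PGL);
   - its kernel is central (isogeny: ker rho_std is central in H);
   - its image contains the image of SL_{D^n}(R) (generated by transvections). *)
Definition std_proj_rep (R : fieldType) (D : falgType R) (n : nat)
  (Hr : groupType) (rho : Hr -> 'M[D]_n) : Prop :=
  [/\ forall x, invertible_mx (rho x),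
      forall x y, proj_eq (rho (x * y)%g) (rho x *m rho y),
      forall x, proj_eq (rho x) 1%:M -> forall y, (x * y = y * x)%g &
      forall (i j : 'I_n) (a : D), i != j ->
        exists x, proj_eq (rho x) (transvection i j a)].

(* Main.v *)
Require Import Defs.
From HB Require Import structures.
From mathcomp Require Import all_boot all_order all_algebra all_field.
From mathcomp Require Import monoid.
From mathcomp Require Import reals.
From Stdlib Require Import Classical.
Set Implicit Arguments. Unset Strict Implicit. Unset Printing Implicit Defensive.
Import GRing.Theory.
Local Open Scope ring_scope.

Definition ev (D : unitRingType) (n : nat) (s : 'I_n) : 'cV[D]_n := delta_mx s 0.

Lemma evE (D : unitRingType) n (s r : 'I_n) (z : 'I_1) : (ev D s) r z = (r == s)%:R.
Proof. by rewrite /ev mxE (ord1 z) eqxx andbT. Qed.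

Lemma rsE (D : unitRingType) m p (A : 'M[D]_(m,p)) (c : D) r s :
  (A *m c%:M) r s = A r s * c.
Proof.
rewrite mxE (bigD1 s) //= big1 => [|k /negbTE nks]; last by rewrite mxE nks mulr0n mulr0.
by rewrite mxE eqxx mulr1n addr0.
Qed.

Lemma AeE (D : unitRingType) n m (A : 'M[D]_(m,n)) (s : 'I_n) r z :
  (A *m ev D s) r z = A r s.
Proof. by rewrite /ev -colE mxE. Qed.

Lemma central_comm (D : unitRingType) m p (A : 'M[D]_(m,p)) (c : D) :
  central_elt c -> c%:M *m A = A *m c%:M.
Proof.
move=> hc; apply/matrixP => r s; rewrite rsE mul_scalar_mx mxE; exact: hc.
Qed.

Lemma Tv (D : unitRingType) n (i j : 'I_n) (a : D) (v : 'cV[D]_n) :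
  transvection i j a *m v = v + ev D i *m (a * v j 0)%:M.
Proof.
rewrite /transvection mulmxDl mul1mx; congr (_ + _).
apply/matrixP => r z; rewrite (ord1 z) rsE evE -scalemxAl mxE mxE.
rewrite (bigD1 j) //= big1 => [|k /negbTE nk]; last by rewrite mxE nk andbF mul0r.
rewrite mxE eqxx andbT addr0; case: (r == i); by rewrite ?mul1r ?mulr1 ?mul0r ?mulr0.
Qed.

Lemma dd0 (D : unitRingType) n (i j : 'I_n) (b : D) : i != j ->
  delta_mx i j *m (b *: delta_mx i j) = 0 :> 'M[D]_n.
Proof.
move=> nij; apply/matrixP => r s; rewrite !mxE big1 // => k _.
rewrite !mxE; case: (k =P j) => [->|_]; last by rewrite andbF mul0r.
by rewrite [j == i]eq_sym (negbTE nij) /= mulr0 mulr0.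
Qed.

Lemma TT (D : unitRingType) n (i j : 'I_n) (a : D) : i != j ->
  transvection i j a *m transvection i j (-a) = 1%:M.
Proof.
move=> nij; rewrite /transvection mulmxDl mul1mx mulmxDr mulmx1 -scalemxAl dd0 // scaler0 addr0.
by rewrite -addrA -scalerDl addNr scale0r addr0.
Qed.

Lemma TT' (D : unitRingType) n (i j : 'I_n) (a : D) : i != j ->
  transvection i j (-a) *m transvection i j a = 1%:M.
Proof. by move=> nij; rewrite -{2}(opprK a) TT. Qed.

Lemma rsN (D : unitRingType) m p (A : 'M[D]_(m,p)) : A *m (-1)%:M = - A.
Proof. by apply/matrixP => r s; rewrite rsE mxE mulrN1. Qed.

Lemma decomp (D : unitRingType) n (w : 'cV[D]_n) :
  w = \sum_(i < n) ev D i *m (w i 0)%:M.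
Proof.
apply/matrixP => r z; rewrite (ord1 z) summxE (bigD1 r) //= big1 => [|i nir].
  by rewrite rsE evE eqxx mul1r addr0.
by rewrite rsE evE eq_sym (negbTE nir) mul0r.
Qed.

Lemma span_good (D : unitRingType) n (P : 'cV[D]_n -> Prop) (Cset : 'M[D]_n -> Prop)
  (k : 'I_n)
  (hdiv : forall x : D, x != 0 -> x \is a GRing.unit)
  (hP0 : P 0) (hPD : forall u v, P u -> P v -> P (u + v))
  (hPZ : forall u c, P u -> P (u *m c%:M))
  (hC : forall i j a M, i != j -> Cset M ->
      Cset (transvection i j a *m M *m transvection i j (-a)))
  (hCP : forall M, Cset M -> P (M *m ev D k))
  M j : Cset M -> j != k -> M j k != 0 -> forall w, P w.
Proof.
move=> hM njk nz.
set v := M *m ev D k.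
have vj : v j 0 = M j k by rewrite /v AeE.
have hu : v j 0 \is a GRing.unit by rewrite vj; apply: hdiv.
have hB : forall x y, P x -> P y -> P (x - y).
  by move=> x y Px Py; rewrite -rsN; apply: hPD => //; apply: hPZ.
have Pv : P v by apply: hCP.
have Pe : forall i, i != j -> P (ev D i).
  move=> i nij; have := hCP _ (hC i j (v j 0)^-1 M nij hM).
  rewrite -!mulmxA [transvection i j _ *m ev D k]Tv evE (negbTE njk) mulr0 raddf0.
  rewrite mulmx0 addr0 Tv -/v mulVr // mulmx1 => Pvi.
  by have := hB _ _ Pvi Pv; rewrite addrC addKr.
have Psum : forall (Q : pred 'I_n) (F : 'I_n -> 'cV[D]_n),
    (forall i, Q i -> P (F i)) -> P (\sum_(i | Q i) F i).
  by move=> Q F hF; apply: big_ind.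
have Pej : P (ev D j).
  have Ps : P (\sum_(i | i != j) ev D i *m (v i 0)%:M).
    by apply: Psum => i nij; apply: hPZ; apply: Pe.
  have := hB _ _ Pv Ps; rewrite {1}(decomp v) (bigD1 j) //= addrK => Pj.
  have := hPZ _ (v j 0)^-1 Pj; by rewrite -mulmxA -scalar_mxM mulrV // mulmx1.
have Pall : forall i, P (ev D i).
  by move=> i; case: (i =P j) => [->|/eqP nij] //; apply: Pe.
move=> w; rewrite (decomp w); apply: Psum => i _; apply: hPZ; apply: Pall.
Qed.

Lemma addE (D : unitRingType) m p (A B : 'M[D]_(m,p)) r s : (A + B) r s = A r s + B r s.
Proof. by rewrite mxE. Qed.

Lemma eig_lemma (D : unitRingType) n (Cset : 'M[D]_n -> Prop) (k : 'I_n) (A : 'M[D]_n)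
  (H : forall M, Cset M -> forall j, j != k -> M j k = 0) (g g' : 'M[D]_n) :
  g *m g' = 1%:M -> Cset (g' *m A *m g) ->
  A *m (g *m ev D k) = (g *m ev D k) *m ((g' *m A *m g) k k)%:M.
Proof.
move=> hgg hC; set M := g' *m A *m g.
have hMe : M *m ev D k = ev D k *m (M k k)%:M.
  apply/matrixP => r z; rewrite (ord1 z) AeE rsE evE.
  case: (r =P k) => [->|/eqP nrk]; first by rewrite mul1r.
  by rewrite mul0r (H M hC r nrk).
have -> : A *m (g *m ev D k) = g *m (M *m ev D k).
  by rewrite /M -{1}[A]mul1mx -hgg !mulmxA.
by rewrite hMe mulmxA.
Qed.

Lemma no_good (D : unitRingType) n (Cset : 'M[D]_n -> Prop) (k k1 : 'I_n) (A : 'M[D]_n)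
  (hC : forall i j a M, i != j -> Cset M ->
      Cset (transvection i j a *m M *m transvection i j (-a)))
  (hA : Cset A) (nk1 : k1 != k)
  (H : forall M, Cset M -> forall j, j != k -> M j k = 0) :
  exists c, central_elt c /\ A = c%:M.
Proof.
have Ak : forall r, r != k -> A r k = 0 by move=> r nr; apply: H.
have Aoff1 : forall j, j != k -> forall r, r != j -> A r j = 0.
  move=> j njk r nrj.
  have nkj : k != j by rewrite eq_sym.
  pose g : 'M[D]_n := transvection k j (-1) *m transvection j k 1.
  pose g' : 'M[D]_n := transvection j k (-1) *m transvection k j 1.
  have hgg : g *m g' = 1%:M.
    rewrite /g /g' mulmxA -(mulmxA _ (transvection j k 1)) TT // mulmx1 TT' //.
  have hCg : Cset (g' *m A *m g).
    have := hC j k (-1) _ njk (hC k j 1 A nkj hA).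
    by rewrite opprK /g /g' !mulmxA.
  have := eig_lemma H hgg hCg.
  have -> : g *m ev D k = ev D j.
    rewrite /g -mulmxA [transvection j k 1 *m _]Tv evE eqxx mul1r mulmx1 Tv addE !evE (negbTE njk) eqxx add0r.
    by rewrite mulr1 rsN addrC addKr.
  move/(congr1 (fun X : 'cV[D]_n => X r 0)) => /=; rewrite AeE rsE evE (negbTE nrj) mul0r //.
have Aoff : forall r s, r != s -> A r s = 0.
  move=> r s nrs; case: (s =P k) => [esk|/eqP nsk]; last exact: Aoff1.
  by rewrite esk; apply: Ak; rewrite -esk.
have Adiag : forall j, A j j = A k k.
  move=> j; case: (j =P k) => [->|/eqP njk] //.
  have nkj : k != j by rewrite eq_sym.
  have hgg : transvection j k (1:D) *m transvection j k (-1) = 1%:M by apply: TT.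
  have hCg : Cset (transvection j k (-1:D) *m A *m transvection j k 1).
    by have := hC j k (-1) _ njk hA; rewrite opprK.
  have := eig_lemma H hgg hCg.
  rewrite Tv evE eqxx mul1r mulmx1 => E.
  have Ek := congr1 (fun X : 'cV[D]_n => X k 0) E; have Ej := congr1 (fun X : 'cV[D]_n => X j 0) E.
  move: Ek Ej => /=; rewrite mulmxDr !addE !AeE !rsE !addE !evE eqxx (negbTE nkj) (negbTE njk).
  rewrite !eqxx /= !(mulr1n, mulr0n) (Aoff k j nkj) (Aoff j k njk) !addr0 !add0r !mul1r => -> .
  done.
have Acent : forall d, A k k * d = d * A k k.
  move=> d.
  have hgg : transvection k1 k d *m transvection k1 k (-d) = 1%:M by apply: TT.
  have hCg : Cset (transvection k1 k (-d) *m A *m transvection k1 k (- - d)).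
    exact: hC.
  rewrite opprK in hCg.
  have := eig_lemma H hgg hCg.
  rewrite Tv evE eqxx mulr1 => E.
  have Ek := congr1 (fun X : 'cV[D]_n => X k 0) E; have Ej := congr1 (fun X : 'cV[D]_n => X k1 0) E.
  move: Ek Ej => /=; rewrite mulmxDr mulmxA !(addE, rsE, AeE, evE) !eqxx.
  rewrite (negbTE nk1) [k == k1]eq_sym (negbTE nk1) /= !(mulr1n, mulr0n).
  rewrite (Aoff k k1) ?(eq_sym k) // (Aoff k1 k nk1) !mul0r !addr0 !add0r !mul1r.
  by rewrite Adiag => <-.
exists (A k k); split => //.
apply/matrixP => r s; rewrite mxE; case: (r =P s) => [->|/eqP nrs].
  by rewrite Adiag mulr1n.
by rewrite mulr0n Aoff.
Qed.

Lemma core (D : unitRingType) n (P : 'cV[D]_n -> Prop) (Cset : 'M[D]_n -> Prop)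
  (k k1 : 'I_n) (A : 'M[D]_n)
  (hdiv : forall x : D, x != 0 -> x \is a GRing.unit)
  (hP0 : P 0) (hPD : forall u v, P u -> P v -> P (u + v))
  (hPZ : forall u c, P u -> P (u *m c%:M))
  (hC : forall i j a M, i != j -> Cset M ->
      Cset (transvection i j a *m M *m transvection i j (-a)))
  (hCP : forall M, Cset M -> P (M *m ev D k))
  (hA : Cset A) (hnc : ~ exists c, central_elt c /\ A = c%:M) (nk1 : k1 != k) :
  forall w, P w.
Proof.
case: (classic (exists M j, Cset M /\ j != k /\ M j k != 0)).
  by move=> [M [j [hM [njk nz]]]]; apply: (span_good hdiv hP0 hPD hPZ hC hCP hM njk nz).
move=> hno; exfalso; apply: hnc; apply: (no_good hC hA nk1).
move=> M hM j njk; case: (eqVneq (M j k) 0) => // nz; exfalso; apply: hno.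
by exists M, j.
Qed.

Inductive elem (D : unitRingType) (n : nat) : 'M[D]_n -> 'M[D]_n -> Prop :=
| elem1 : elem 1%:M 1%:M
| elemT i j a g g' : i != j -> elem g g' ->
    elem (transvection i j a *m g) (g' *m transvection i j (-a)).

Lemma elem_inv (D : unitRingType) n (g g' : 'M[D]_n) : elem g g' ->
  g *m g' = 1%:M /\ g' *m g = 1%:M.
Proof.
elim => [|i j a h h' nij _ [IH1 IH2]]; first by rewrite mulmx1.
split.
  by rewrite mulmxA -(mulmxA _ h) IH1 mulmx1 TT.
by rewrite mulmxA -(mulmxA _ (transvection i j (-a))) TT' // mulmx1.
Qed.

Lemma elem_conj (D : unitRingType) n (Cset : 'M[D]_n -> Prop)
  (hC : forall i j a M, i != j -> Cset M ->
      Cset (transvection i j a *m M *m transvection i j (-a)))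
  (g g' : 'M[D]_n) : elem g g' -> forall M, Cset M -> Cset (g *m M *m g').
Proof.
elim => [|i j a h h' nij _ IH] M hM; first by rewrite mul1mx mulmx1.
have := hC i j a _ nij (IH M hM); by rewrite !mulmxA.
Qed.

Lemma elem_r (D : unitRingType) n (g g' : 'M[D]_n) i j a : i != j -> elem g g' ->
  elem (g *m transvection i j a) (transvection i j (-a) *m g').
Proof.
move=> nij; elim => [|i' j' a' h h' nij' _ IH].
  by have := elemT a nij (@elem1 D n); rewrite !mulmx1 !mul1mx.
by have := elemT a' nij' IH; rewrite !mulmxA.
Qed.

Lemma elem_sym (D : unitRingType) n (g g' : 'M[D]_n) : elem g g' -> elem g' g.
Proof.
elim => [|i j a h h' nij _ IH]; first exact: elem1.
by have := elem_r (-a) nij IH; rewrite opprK.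
Qed.

Lemma reach (D : unitRingType) n (k : 'I_n) (u : 'cV[D]_n) : u k 0 = 1 ->
  exists g g', elem g g' /\ g *m ev D k = u.
Proof.
move=> uk.
have gen : forall s : seq 'I_n, k \notin s -> exists g g', elem g g' /\
    g *m ev D k = ev D k + \sum_(i <- s) ev D i *m (u i 0)%:M.
  elim => [|i s IH]; first by move=> _; exists 1%:M, 1%:M; rewrite mul1mx big_nil addr0; split => //; exact: elem1.
  rewrite in_cons negb_or => /andP [nki nks].
  have [g [g' [hg hgk]]] := IH nks.
  have nik : i != k by rewrite eq_sym.
  exists (transvection i k (u i 0) *m g), (g' *m transvection i k (- u i 0)); split.
    exact: elemT.
  have sk : (\sum_(i' <- s) ev D i' *m (u i' 0)%:M) k 0 = 0.
    rewrite summxE big1_seq // => i' /andP [_ hi']; rewrite rsE evE.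
    case: (k =P i') => [ek|]; last by rewrite mul0r.
    by move: nks; rewrite ek hi'.
  rewrite -mulmxA hgk Tv addE evE eqxx sk /= mulr1n addr0 mulr1 big_cons -addrA.
  congr (_ + _); exact: addrC.
have hks : k \notin [seq i <- enum 'I_n | i != k] by rewrite mem_filter eqxx.
have [g [g' [hg hgk]]] := gen _ hks.
exists g, g'; split => //; rewrite hgk big_filter big_enum_cond.
symmetry; rewrite {1}(decomp u) [LHS](bigD1 k) //= uk mulmx1; congr (_ + _).

Qed.

Lemma unit_neq0 (D : unitRingType) (x : D) : x \is a GRing.unit -> x != 0.
Proof. by apply: contraTneq => ->; rewrite unitr0. Qed.

Lemma central_mul (D : unitRingType) (c d : D) : central_elt c -> central_elt d ->
  central_elt (c * d).
Proof. by move=> hc hd x; rewrite -mulrA hd mulrA hc -mulrA. Qed.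

Lemma central_inv (D : unitRingType) (c : D) : c \is a GRing.unit -> central_elt c ->
  central_elt c^-1.
Proof.
move=> hu hc x.
by rewrite -{1}(mulr1 (c^-1 * x)) -(mulrV hu) mulrA -(mulrA _ x c) -hc mulKr.
Qed.


Lemma pe_refl (D : unitRingType) n (A : 'M[D]_n) : proj_eq A A.
Proof. by exists 1; split; [move=> d; rewrite mul1r mulr1 | split; [exact: oner_neq0 | rewrite mul1mx]]. Qed.

Lemma pe_sym (D : unitRingType) n (hdiv : forall x : D, x != 0 -> x \is a GRing.unit)
  (A B : 'M[D]_n) : proj_eq A B -> proj_eq B A.
Proof.
move=> [c [hc [nz ->]]]; have hu := hdiv _ nz.
exists c^-1; split; first exact: central_inv.
split; first by apply: unit_neq0; rewrite unitrV.
by rewrite mulmxA -scalar_mxM mulVr // mul1mx.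
Qed.

Lemma pe_trans (D : unitRingType) n (hdiv : forall x : D, x != 0 -> x \is a GRing.unit)
  (A B C : 'M[D]_n) : proj_eq A B -> proj_eq B C -> proj_eq A C.
Proof.
move=> [c [hc [nz ->]]] [d [hd [nzd ->]]].
exists (c * d); split; first exact: central_mul.
split; last by rewrite scalar_mxM mulmxA.
by apply: unit_neq0; rewrite unitrMl ?hdiv.
Qed.

Lemma pe_mul2 (D : unitRingType) n (hdiv : forall x : D, x != 0 -> x \is a GRing.unit)
  (A A' B B' : 'M[D]_n) : proj_eq A A' -> proj_eq B B' -> proj_eq (A *m B) (A' *m B').
Proof.
move=> [c [hc [nz ->]]] [d [hd [nzd ->]]].
exists (c * d); split; first exact: central_mul.
split; first by apply: unit_neq0; rewrite unitrMl ?hdiv.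
rewrite scalar_mxM -!mulmxA; congr (_ *m _); rewrite !mulmxA; congr (_ *m _).
by rewrite central_comm.
Qed.

Definition spanP (D : unitRingType) n (S : 'cV[D]_n -> Prop) (w : 'cV[D]_n) : Prop :=
  exists (k : nat) (vs : 'I_k -> 'cV[D]_n) (cs : 'I_k -> D),
    (forall i, S (vs i)) /\ w = \sum_(i < k) rscale (vs i) (cs i).

Lemma spanP0 (D : unitRingType) n (S : 'cV[D]_n -> Prop) : spanP S 0.
Proof.
exists 0%N, (fun _ => 0), (fun _ => 0); split; first by case.
by rewrite big_ord0.
Qed.

Lemma spanPD (D : unitRingType) n (S : 'cV[D]_n -> Prop) u v :
  spanP S u -> spanP S v -> spanP S (u + v).
Proof.
move=> [k1 [vs1 [cs1 [h1 ->]]]] [k2 [vs2 [cs2 [h2 ->]]]].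
exists (k1 + k2)%N, (fun i => match split i with inl a => vs1 a | inr b => vs2 b end),
  (fun i => match split i with inl a => cs1 a | inr b => cs2 b end); split.
  by move=> i; case: (split i).
rewrite big_split_ord; congr (_ + _); apply: eq_bigr => i _.
  by rewrite (unsplitK (inl i)).
by rewrite (unsplitK (inr i)).
Qed.

Lemma spanPZ (D : unitRingType) n (S : 'cV[D]_n -> Prop) u c :
  spanP S u -> spanP S (u *m c%:M).
Proof.
move=> [k [vs [cs [h ->]]]].
exists k, vs, (fun i => cs i * c); split => //.
rewrite mulmx_suml; apply: eq_bigr => i _; by rewrite /rscale -mulmxA -scalar_mxM.
Qed.

Unset Implicit Arguments.
Set Strict Implicit.

Theorem proposition3p13 (R : realType) (D : falgType R) (n : nat)
  (Hr : groupType) (rho : Hr -> 'M[D]_n) :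
  division_algebra D -> (2 <= n)%N -> std_proj_rep rho ->
  forall h : Hr, ~ (forall y : Hr, (h * y = y * h)%g) ->
  forall p : 'cV[D]_n, p != 0 ->
    rspan_full (fun v : 'cV[D]_n =>
      exists x : Hr, v = rho (x * h * x^-1)%g *m p).
Proof.
move=> hdiv hn [hinv hmul hker htr] h hnc p hp.
set S := (fun v : 'cV[D]_n => exists x : Hr, v = rho (x * h * x^-1)%g *m p).
suff H : forall w, spanP S w by move=> w; exact: H.
pose o0 : 'I_n := Ordinal (ltnW hn).
pose o1 : 'I_n := Ordinal hn.
have pe1 : proj_eq (rho 1%g) 1%:M.
  have [c [hc [nz e]]] := hmul 1%g 1%g; rewrite mulg1 in e.
  have [B [hB1 hB2]] := hinv 1%g.
  have e2 : 1%:M = c%:M *m rho 1%g.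
    by rewrite -hB1 {1}e -!mulmxA hB1 mulmx1.
  apply: (pe_sym hdiv); exists c; split => //; split => //; by rewrite mulmx1.
have peinv : forall x (M M' : 'M[D]_n), proj_eq (rho x) M -> M *m M' = 1%:M ->
    proj_eq (rho x^-1%g) M'.
  move=> x M M' hx hMM'.
  have h1 : proj_eq 1%:M (rho x^-1%g *m M).
    have := hmul x^-1%g x; rewrite mulVg => hm.
    exact: (pe_trans hdiv (pe_sym hdiv pe1) (pe_trans hdiv hm (pe_mul2 hdiv (pe_refl _) hx))).
  have := pe_mul2 hdiv h1 (pe_refl M'); rewrite mul1mx -mulmxA hMM' mulmx1 => h2.
  exact: (pe_sym hdiv h2).
have peconj : forall x z, proj_eq (rho (x * z * x^-1)%g) (rho x *m rho z *m rho x^-1%g).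
  move=> x z; apply: (pe_trans hdiv (hmul _ _)); exact: (pe_mul2 hdiv (hmul _ _) (pe_refl _)).
set Cset := fun M : 'M[D]_n => exists y, proj_eq M (rho (y * h * y^-1)%g).
have hC : forall i j a M, i != j -> Cset M ->
    Cset (transvection i j a *m M *m transvection i j (-a)).
  move=> i j a M nij [y hy]; have [x hx] := htr i j a nij.
  exists (x * y)%g.
  have -> : ((x * y) * h * (x * y)^-1 = x * (y * h * y^-1) * x^-1)%g.
    by rewrite invgM !mulgA.
  apply: (pe_trans hdiv _ (pe_sym hdiv (peconj x _))).
  apply: (pe_mul2 hdiv (pe_mul2 hdiv (pe_sym hdiv hx) hy)).
  exact: (pe_sym hdiv (peinv _ _ _ hx (TT a nij))).
have hcp : forall M, Cset M -> forall c, spanP S (M *m p *m c%:M).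
  move=> M [y [c0 [hc0 [nz0 ->]]]] c.
  exists 1%N, (fun _ => rho (y * h * y^-1)%g *m p), (fun _ => c0 * c); split.
    by move=> _; exists y.
  rewrite big_ord1 /rscale scalar_mxM !mulmxA; congr (_ *m _).
  by rewrite -mulmxA (central_comm _ hc0).
have hAnc : ~ exists c, central_elt c /\ rho h = c%:M.
  move=> [c [hc e]]; apply: hnc; apply: hker.
  exists c; split => //; split; last by rewrite e mulmx1.
  apply/eqP => c0; have [B [hB _]] := hinv h; move: hB.
  rewrite e c0 raddf0 mul0mx => /matrixP /(_ o0 o0); rewrite !mxE eqxx mulr1n.
  by move/eqP; rewrite eq_sym oner_eq0.
have [k pk] : exists k, p k 0 != 0.
  case: (classic (exists k, p k 0 != 0)) => // hno; exfalso.
  move: hp => /eqP; apply; apply/matrixP => r z; rewrite (ord1 z) mxE.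
  case: (eqVneq (p r 0) 0) => // nz; exfalso; apply: hno; by exists r.
have hu := hdiv _ pk.
have uk : (p *m ((p k 0)^-1)%:M) k 0 = 1 by rewrite rsE mulrV.
have [g [g' [hg hgk]]] := reach uk.
have [hgg hg'g] := elem_inv hg.
have [k1 nk1] : exists k1 : 'I_n, k1 != k.
  case: (eqVneq k o0) => [-> | nk]; last by exists o0; rewrite eq_sym.
  by exists o1.
have hP0 : spanP S (g *m 0) by rewrite mulmx0; exact: spanP0.
have hPD : forall u v, spanP S (g *m u) -> spanP S (g *m v) -> spanP S (g *m (u + v)).
  by move=> u v h1 h2; rewrite mulmxDr; exact: spanPD.
have hPZ : forall u c, spanP S (g *m u) -> spanP S (g *m (u *m c%:M)).
  by move=> u c h1; rewrite mulmxA; exact: spanPZ.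
have hC' : forall i j a M, i != j -> Cset (g *m M *m g') ->
    Cset (g *m (transvection i j a *m M *m transvection i j (-a)) *m g').
  move=> i j a M nij hM.
  have := elem_conj hC (elem_sym hg) hM.
  rewrite !mulmxA hg'g mul1mx -mulmxA hg'g mulmx1 => hM'.
  by have := elem_conj hC hg (hC i j a M nij hM'); rewrite !mulmxA.
have hCP : forall M, Cset (g *m M *m g') -> spanP S (g *m (M *m ev D k)).
  move=> M hM.
  have -> : g *m (M *m ev D k) = (g *m M *m g') *m p *m ((p k 0)^-1)%:M.
    by rewrite -mulmxA -hgk !mulmxA -(mulmxA _ g' g) hg'g mulmx1.
  exact: hcp.
have hA : Cset (g *m (g' *m rho h *m g) *m g').
  rewrite !mulmxA hgg mul1mx -mulmxA hgg mulmx1; exists 1%g.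
  rewrite mul1g invg1 mulg1; exact: pe_refl.
have hnc' : ~ exists c, central_elt c /\ g' *m rho h *m g = c%:M.
  move=> [c [hc e]]; apply: hAnc; exists c; split => //.
  have <- : g *m (g' *m rho h *m g) *m g' = rho h.
    by rewrite !mulmxA hgg mul1mx -mulmxA hgg mulmx1.
  by rewrite e -(central_comm _ hc) -mulmxA hgg mulmx1.
have Hg := core hdiv hP0 hPD hPZ hC' hCP hA hnc' nk1.
by move=> w; have := Hg (g' *m w); rewrite mulmxA hgg mul1mx.
Qed.
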